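(* Let $n_1,\dots,n_k$ be nonnegative integers and $N=n_1+\dots+n_k$. Then \[ \mathcal{L}^{(t)}_T\Big(\prod_{i=1}^{k}T^{(t)}_{n_i}(x)\Big) \] equals the number of subsets $S$ (the ''marked'' vertices) of the vertex set of $C_{n_1}\sqcup\dots\sqcup C_{n_k}$ with $|S|=N/(t+1)$ (the count is $0$ if $N/(t+1)$ is not an integer) such that for every marked vertex $j$ in a cycle $C_{n_i}$, the $t$ vertices $j+1,j+2,\dots,j+t$ (indices mod $n_i$) are not all unmarked.
   Context: Fix an integer $t\ge1$. For $n\ge1$ let $C_n$ be the $n$-cycle with vertices $1,\dots,n$ (indices mod $n$); $C_0$ is empty. If $n\ge t+1$, the $t$-paths in $C_n$ are the $n$ sequences $(i,i+1,\dots,i+t)$ mod $n$, $i=1,\dots,n$; if $n\le t$ there are none. Define $T^{(t)}_n(x)=\sum_F(-1)^{|F|}x^{\,n-(t+1)|F|}$ over all families $F$ of $t$-paths in $C_n$ with pairwise disjoint vertex sets, $T^{(t)}_0=1$. Let $\mathcal{L}^{(t)}_T$ be the linear functional on polynomials with $\mathcal{L}^{(t)}_T(x^{(t+1)j})=\binom{(t+1)j}{j}$ for $j\ge0$ and $\mathcal{L}^{(t)}_T(x^m)=0$ if $t+1\nmid m$. *)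

(* Defs.v *)
From HB Require Import structures.
From mathcomp Require Import all_boot all_order all_algebra.
Set Implicit Arguments. Unset Strict Implicit. Unset Printing Implicit Defensive.
Import Order.TTheory GRing.Theory Num.Theory.
Local Open Scope ring_scope.

(* Vertices of C_n are 'I_n (vertex v+1 of the paper is v here).
   The t-path starting at i has vertex set { (i + s) mod n | 0 <= s <= t }. *)
Definition tpath_vert (t n : nat) (i : 'I_n) : {set 'I_n} :=
  [set j : 'I_n | [exists s : 'I_t.+1, ((i + s) %% n)%N == j]].

(* A family of t-paths (indexed by starting points F) with pairwise disjoint
   vertex sets; t-paths exist only if n >= t+1. *)
Definition disj_family (t n : nat) (F : {set 'I_n}) : bool :=
  (F == set0) ||
  ((t < n)%N &&
   [forall a in F, forall b in F,
      (a != b) ==> [disjoint (@tpath_vert t n a) & (@tpath_vert t n b)]]).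

Definition Tpoly (t n : nat) : {poly int} :=
  \sum_(F : {set 'I_n} | @disj_family t n F)
     ((-1) ^+ #|F|) *: 'X^(n - t.+1 * #|F|).

Definition LT (t : nat) (p : {poly int}) : int :=
  \sum_(m < size p)
     p`_m * (if (t.+1 %| m)%N then ('C(m, m %/ t.+1))%:Z else 0).

Definition good_marking (t k : nat) (n : 'I_k -> nat)
    (S : {set {i : 'I_k & 'I_(n i)}}) : bool :=
  [forall v in S,
     [exists j' : 'I_(n (tag v)),
        [exists s : 'I_t.+1,
           [&& (0 < s)%N, (((tagged v) + s) %% n (tag v))%N == j'
             & Tagged (fun i => 'I_(n i)) j' \in S]]]].

(* Main.v *)
Require Import Defs.
From HB Require Import structures.
From mathcomp Require Import all_boot all_order all_algebra.
Set Implicit Arguments. Unset Strict Implicit. Unset Printing Implicit Defensive.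
Import GRing.Theory.


Lemma alt_sum (T : finType) (A : {set T}) :
  (\sum_(F : {set T} | F \subset A) (-1) ^+ #|F| = (A == set0)%:R :> int)%R.
Proof.
case: (set_0Vmem A) => [->|[a aA]].
  rewrite eqxx (eq_bigl (fun F => F == set0)); last by move=> F; rewrite subset0.
  by rewrite big_pred1_eq cards0 expr0.
have -> : (A == set0) = false by apply/negbTE/set0Pn; exists a.
rewrite (bigID (fun F : {set T} => a \in F)) /=.
rewrite (reindex_onto (fun G => a |: G) (fun F => F :\ a)) /=; last first.
  by move=> F /andP [_ aF]; rewrite setD1K.
rewrite -[RHS](subrr (\sum_(F : {set T} | (F \subset A) && (a \notin F)) (-1) ^+ #|F| : int)%R).
rewrite -sumrN addrC; congr (_ + _)%R.
apply: eq_big => G.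
  rewrite setU11 andbT subUset sub1set aA /=.
  case aG: (a \in G); last by rewrite setU1K ?aG // eqxx ?andbT.
  rewrite andbF; apply/andP => [[_ /eqP E]].
  by move: aG; rewrite -E !inE eqxx.
move=> /andP [_ /eqP E].
have aG : a \notin G by rewrite -E !inE eqxx.
by rewrite cardsU1 aG exprD expr1 mulN1r.
Qed.

Section Main.
Variables (t k : nat) (n : 'I_k -> nat).
Local Notation V := {i : 'I_k & 'I_(n i)}.

Lemma n_gt0 (v : V) : (0 < n (tag v))%N.
Proof. by case: v => i [x hx] /=; apply: leq_ltn_trans hx. Qed.

Definition vshift (v : V) (s : nat) : V :=
  Tagged (fun i => 'I_(n i)) (Ordinal (ltn_pmod (tagged v + s) (n_gt0 v))).

Lemma veqP (u v : V) : tag u = tag v -> val (tagged u) = val (tagged v) -> u = v.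
Proof.
case: u => i x; case: v => j y /= Hij; subst j => /val_inj -> //.
Qed.

Lemma vshift0 v : vshift v 0 = v.
Proof. by apply: veqP => //=; rewrite addn0 modn_small. Qed.

Lemma vshift_val (u v : V) s : u = vshift v s ->
  tag u = tag v /\ val (tagged u) = ((tagged v + s) %% n (tag v))%N.
Proof. by move=> ->. Qed.

Lemma vshift_meet (a b : V) (s s' : nat) :
  vshift a s = vshift b s' -> (s' <= s)%N -> b = vshift a (s - s').
Proof.
case: a => i x; case: b => j y E.
have Eij : j = i by have := congr1 tag E.
subst j.
have /= H := congr1 (fun w : V => val (tagged w)) E.
move=> le; apply: veqP => //=.
apply/eqP; rewrite -(modn_small (ltn_ord y)); apply/eqP.
apply/eqP; rewrite eq_sym -(eqn_modDr s') -addnA subnK //; apply/eqP; exact: H.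
Qed.

Lemma vshift_inj (a : V) (s s' : nat) : (s < n (tag a))%N -> (s' < n (tag a))%N ->
  vshift a s = vshift a s' -> s = s'.
Proof.
move=> hs hs' E.
have /= H := congr1 (fun w : V => val (tagged w)) E.
move/eqP: H; rewrite eqn_modDl !modn_small //; exact/eqP.
Qed.

Lemma vshift_neq (a : V) s : (0 < s)%N -> (s < n (tag a))%N -> vshift a s != a.
Proof.
move=> s0 sn; apply/eqP => E.
have : vshift a s = vshift a 0 by rewrite vshift0.
by move/vshift_inj => /(_ sn (n_gt0 a)) h; rewrite h in s0.
Qed.

Definition pathV (v : V) : {set V} := [set vshift v s | s : 'I_t.+1].

Definition disjV (F : {set V}) : bool :=
  [forall a in F, (t < n (tag a))%N] &&
  [forall a in F, forall b in F, (a != b) ==> [disjoint pathV a & pathV b]].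

Lemma disjVP (F : {set V}) : reflect
  ((forall a, a \in F -> (t < n (tag a))%N) /\
   (forall a b, a \in F -> b \in F -> a != b -> [disjoint pathV a & pathV b]))
  (disjV F).
Proof.
apply: (iffP andP) => [[/forallP H1 /forallP H2]|[H1 H2]]; split.
- by move=> a aF; have /implyP := H1 a; apply.
- move=> a b aF bF ab; have /implyP/(_ aF)/forallP/(_ b)/implyP/(_ bF)/implyP := H2 a.
  by apply.
- by apply/forallP => a; apply/implyP; apply: H1.
- apply/forallP => a; apply/implyP => aF; apply/forallP => b; apply/implyP => bF.
  by apply/implyP; apply: H2.
Qed.

Lemma disjV_sub (H F : {set V}) : H \subset F -> disjV F -> disjV H.
Proof.
move=> /subsetP sub /disjVP [H1 H2]; apply/disjVP; split.
  by move=> a /sub; apply: H1.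
by move=> a b /sub aF /sub bF; apply: H2.
Qed.

Lemma mem_pathV a s : (s <= t)%N -> vshift a s \in pathV a.
Proof.
move=> st; have -> : s = (Ordinal (st : (s < t.+1)%N) : nat) by [].
exact: imset_f.
Qed.

Definition UF (F : {set V}) : {set V} :=
  (fun p : V * 'I_t.+1 => vshift p.1 p.2) @: setX F [set: 'I_t.+1].

Lemma UFP (F : {set V}) x : reflect (exists a, exists s : 'I_t.+1, a \in F /\ x = vshift a s) (x \in UF F).
Proof.
apply: (iffP imsetP) => [[[a s]]|[a [s [aF ->]]]].
  by rewrite !inE /= => /andP [aF _] ->; exists a, s.
by exists (a, s) => //; rewrite !inE aF.
Qed.

Lemma sub_UF (F : {set V}) : F \subset UF F.
Proof. apply/subsetP => a aF; apply/UFP; exists a, ord0; by rewrite vshift0. Qed.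

Lemma disj_notin (F : {set V}) a s : disjV F -> a \in F -> (0 < s)%N -> (s <= t)%N ->
  vshift a s \notin F.
Proof.
move=> /disjVP [H1 H2] aF s0 st; apply/negP => bF.
have ne : a != vshift a s by rewrite eq_sym vshift_neq //; apply: leq_ltn_trans (H1 a aF).
have := H2 _ _ aF bF ne.
move/disjointFr => /(_ _ (mem_pathV a st)).
by have := mem_pathV (vshift a s) (leq0n t); rewrite vshift0 => ->.
Qed.

Lemma card_UF (F : {set V}) : disjV F -> #|UF F| = (#|F| * t.+1)%N.
Proof.
move=> /disjVP [H1 H2].
rewrite card_in_imset ?cardsX ?cardsT ?card_ord //.
move=> [a s] [b s']; rewrite !inE /= !andbT => aF bF E.
case: (eqVneq a b) => [eab|nab].
  subst b; congr (_, _); apply: val_inj.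
  by apply: (vshift_inj (leq_ltn_trans _ (H1 a aF)) (leq_ltn_trans _ (H1 a aF)) E);
    rewrite -ltnS.
have := H2 _ _ aF bF nab.
move/disjointFr => /(_ _ (mem_pathV a (ltn_ord s))).
by rewrite E (mem_pathV b (ltn_ord s')).
Qed.


Definition bad (S : {set V}) (v : V) : bool :=
  [forall s : 'I_t.+1, (0 < s)%N ==> (vshift v s \notin S)].
Definition BS (S : {set V}) : {set V} := [set v in S | bad S v].

Lemma goodE (S : {set V}) : @good_marking t k n S = (BS S == set0).
Proof.
apply/idP/idP.
- move=> /forallP G; apply/eqP/setP => v; rewrite !inE.
  apply/negbTE/andP => [[vS /forallP B]].
  have /implyP/(_ vS)/existsP [j' /existsP [s /and3P [s0 Ej jS]]] := G v.
  have /implyP/(_ s0) := B s; apply/negP; apply/negPn.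
  have -> // : vshift v s = Tagged (fun i => 'I_(n i)) j'.
  by apply: veqP => //=; apply/eqP.
- move/eqP => E; apply/forallP => v; apply/implyP => vS.
  have : v \notin BS S by rewrite E in_set0.
  rewrite inE vS /= => /forallPn [s]; rewrite negb_imply negbK => /andP [s0 sS].
  apply/existsP; exists (tagged (vshift v s)); apply/existsP; exists s.
  by rewrite s0 /= eqxx.
Qed.

Lemma bad_meet (S : {set V}) (a b : V) (s s' : nat) : bad S a -> b \in S -> a != b ->
  vshift a s = vshift b s' -> (s' <= s)%N -> (s <= t)%N -> False.
Proof.
move=> /forallP B bS ab E le st.
have Hb := vshift_meet E le.
case: (posnP (s - s')) => [z|pos].
  by move: ab; rewrite Hb z vshift0 eqxx.
have lt : (s - s' < t.+1)%N by apply: leq_ltn_trans (leq_subr s' s) _.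
have /implyP/(_ pos) := B (Ordinal lt).
by rewrite /= -Hb bS.
Qed.

Lemma bad_disj (S F : {set V}) : F \subset BS S -> disjV F.
Proof.
move=> /subsetP sub; apply/disjVP; split.
  move=> a /sub; rewrite inE => /andP [aS /forallP B].
  rewrite ltnNge; apply/negP => le.
  have lt : (n (tag a) < t.+1)%N by [].
  have /implyP/(_ (n_gt0 a)) := B (Ordinal lt).
  have -> : vshift a (Ordinal lt) = a.
    by apply: veqP => //=; rewrite modnDr modn_small.
  by rewrite aS.
move=> a b aF bF ab.
have := sub _ aF; rewrite inE => /andP [aS Ba].
have := sub _ bF; rewrite inE => /andP [bS Bb].
rewrite -setI_eq0; apply/eqP/setP => x; rewrite !inE.
apply/negbTE/andP => [[/imsetP [s _ Ex] /imsetP [s' _ Ex']]].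
rewrite Ex in Ex'.
case: (leqP s' s) => le.
  by apply: (bad_meet Ba bS ab Ex' le); rewrite -ltnS.
apply: (bad_meet Bb aS _ (esym Ex') (ltnW le)); first by rewrite eq_sym.
by rewrite -ltnS.
Qed.


Definition tg i (x : 'I_(n i)) : V := Tagged (fun j => 'I_(n j)) x.

Lemma tg_inj i : injective (@tg i).
Proof. by move=> x y /eqP; rewrite eq_Tagged /= => /eqP. Qed.

Lemma pathV_tg i (a : 'I_(n i)) : pathV (tg a) = @tg i @: @tpath_vert t (n i) a.
Proof.
apply/setP => w; apply/imsetP/imsetP.
  move=> [s _ ->]; exists (tagged (vshift (tg a) s)) => //.
  by rewrite inE; apply/existsP; exists s.
move=> [j]; rewrite inE => /existsP [s /eqP Es] ->.
by exists s => //; apply: veqP => //=; rewrite Es.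
Qed.

Lemma disjoint_tg i (A B : {set 'I_(n i)}) :
  [disjoint @tg i @: A & @tg i @: B] = [disjoint A & B].
Proof.
by rewrite -!setI_eq0 -imsetI ?imset_eq0 //; move=> x y _ _; apply: tg_inj.
Qed.

Lemma disjV_tg i (G : {set 'I_(n i)}) : disjV (@tg i @: G) = disj_family t G.
Proof.
rewrite /disj_family.
case: (set_0Vmem G) => [->|[a0 a0G]].
  rewrite eqxx imset0; apply/disjVP; split => a; by rewrite in_set0.
have -> : (G == set0) = false by apply/negbTE/set0Pn; exists a0.
apply/disjVP/andP => [[H1 H2]|[H1 /forallP H2]]; split.
- exact: (H1 _ (imset_f _ a0G)).
- apply/forallP => a; apply/implyP => aG; apply/forallP => b; apply/implyP => bG.
  apply/implyP => ab.
  have := H2 _ _ (imset_f (@tg i) aG) (imset_f (@tg i) bG).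
  rewrite !pathV_tg disjoint_tg; apply.
  by apply: contra ab => /eqP /tg_inj ->.
- by move=> a /imsetP [x _ ->].
- move=> a b /imsetP [x xG ->] /imsetP [y yG ->] xy.
  have /implyP/(_ xG)/forallP/(_ y)/implyP/(_ yG)/implyP := H2 x.
  rewrite !pathV_tg disjoint_tg; apply.
  by apply: contra xy => /eqP ->.
Qed.

Definition fibS i (H : {set V}) : bool := [forall v in H, tag v == i].

Lemma TpolyV i : Tpoly t (n i) =
  (\sum_(H : {set V} | fibS i H && disjV H) (-1) ^+ #|H| *: 'X^(n i - t.+1 * #|H|))%R.
Proof.
rewrite (reindex_onto (fun G : {set 'I_(n i)} => @tg i @: G)
   (fun H : {set V} => [set j | tg j \in H])) /=; last first.
  move=> H /andP [/forallP fH _]; apply/setP => v; apply/imsetP/idP.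
    by move=> [j]; rewrite inE => jH ->.
  move=> vH; have /implyP/(_ vH)/eqP := fH v.
  case: v vH => j x /= vH Eji; subst j.
  by exists x => //; rewrite inE.
rewrite /Tpoly; apply: eq_big => G.
  rewrite disjV_tg.
  have -> : fibS i (@tg i @: G).
    by apply/forallP => v; apply/implyP => /imsetP [x _ ->].
  suff -> : [set j | tg j \in @tg i @: G] == G by rewrite andbT.
  apply/eqP/setP => x; rewrite inE; apply/imsetP/idP => [[y yG /tg_inj ->] //|xG].
  by exists x.
by move=> _; rewrite card_imset //; apply: tg_inj.
Qed.

Definition fib i (F : {set V}) : {set V} := [set v in F | tag v == i].

Lemma card_fibT i : #|[set v : V | tag v == i]| = n i.
Proof.
have -> : [set v : V | tag v == i] = @tg i @: [set: 'I_(n i)].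
  apply/setP => v; rewrite inE; apply/idP/imsetP.
    by case: v => j x /= /eqP Eji; subst j; exists x; rewrite ?in_setT.
  by move=> [x _ ->].
by rewrite card_imset ?cardsT ?card_ord //; apply: tg_inj.
Qed.

Lemma cardF_part (F : {set V}) : #|F| = \sum_(i < k) #|fib i F|.
Proof.
rewrite -sum1_card (partition_big (fun v : V => tag v) predT) //.
apply: eq_bigr => i _; rewrite -sum1_card; apply: eq_bigl => v; by rewrite inE.
Qed.

Lemma cardV : #|[set: V]| = \sum_(i < k) n i.
Proof.
rewrite cardF_part; apply: eq_bigr => i _; rewrite -card_fibT.
by apply: eq_card => v; rewrite !inE.
Qed.

Lemma UF_bound (F : {set V}) : disjV F -> (#|F| * t.+1 <= \sum_(i < k) n i)%N.
Proof. by move=> D; rewrite -card_UF // -cardV subset_leq_card // subsetT. Qed.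

Lemma fib_bound (F : {set V}) i : disjV F -> (t.+1 * #|fib i F| <= n i)%N.
Proof.
move=> D; have Df : disjV (fib i F).
  by apply: disjV_sub D; apply/subsetP => v; rewrite inE => /andP [].
rewrite mulnC -card_UF // -card_fibT; apply: subset_leq_card.
apply/subsetP => x /UFP [a [s [aF ->]]].
by move: aF; rewrite !inE => /andP [_].
Qed.


Local Notation Ntot := (\sum_(i < k) n i)%N.

Lemma prod_term (F : {set V}) : disjV F ->
  (\prod_(i < k) ((-1) ^+ #|fib i F| *: 'X^(n i - t.+1 * #|fib i F|))
   = (-1) ^+ #|F| *: 'X^(Ntot - t.+1 * #|F|) :> {poly int})%R.
Proof.
move=> D.
under eq_bigr do rewrite -mul_polyC.
rewrite big_split /= -(rmorph_prod (@polyC int)) !prodrXr -cardF_part mul_polyC.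
congr ((_ *: 'X^_)%R).
rewrite sumnB; last by move=> i _; apply: fib_bound.
by rewrite -big_distrr -cardF_part.
Qed.

Lemma family_iff (f : {ffun 'I_k -> {set V}}) :
  (f \in family (fun i H => fibS i H && disjV H)) =
  disjV (\bigcup_(i < k) f i) && ([ffun i => fib i (\bigcup_(i < k) f i)] == f).
Proof.
apply/familyP/andP.
- move=> H.
  have Hf i : fibS i (f i) && disjV (f i) by have := H i.
  have Ft i v : v \in f i -> tag v = i.
    by move: (Hf i) => /andP [/forallP fi _] vi; apply/eqP; have /implyP := fi v; apply.
  have eqf : [ffun i => fib i (\bigcup_(i < k) f i)] = f.
    apply/ffunP => i; rewrite ffunE; apply/setP => v; rewrite inE; apply/andP/idP.
      by move=> [/bigcupP [j _ vj] /eqP vi]; rewrite -vi (Ft j v vj).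
    by move=> vi; split; [apply/bigcupP; exists i | rewrite (Ft i v vi)].
  split; last by rewrite eqf.
  apply/disjVP; split.
    by move=> a /bigcupP [j _ aj]; move: (Hf j) => /andP [_ /disjVP [H1 _]]; apply: H1.
  move=> a b /bigcupP [j _ aj] /bigcupP [j' _ bj'] ab.
  case: (eqVneq j j') => [ejj|ne].
    subst j'; move: (Hf j) => /andP [_ /disjVP [_ H2]]; exact: H2.
  rewrite -setI_eq0; apply/eqP/setP => x; rewrite !inE.
  apply/negbTE/andP => [[/imsetP [s _ Ex] /imsetP [s' _ Ex']]].
  have := congr1 tag Ex'; rewrite Ex /= (Ft _ _ aj) (Ft _ _ bj') => E.
  by move: ne; rewrite E eqxx.
- move=> [D /eqP E] i; rewrite -E ffunE; apply/andP; split.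
    by apply/forallP => v; apply/implyP; rewrite inE => /andP [].
  by apply: disjV_sub D; apply/subsetP => v; rewrite inE => /andP [].
Qed.

Lemma prodT : (\prod_(i < k) Tpoly t (n i) =
  \sum_(F : {set V} | disjV F) (-1) ^+ #|F| *: 'X^(Ntot - t.+1 * #|F|))%R.
Proof.
rewrite (eq_bigr _ (fun i _ => TpolyV i)) bigA_distr_big_dep /=.
rewrite [RHS](reindex_onto (fun f : {ffun 'I_k -> {set V}} => \bigcup_(i < k) f i)
   (fun F => [ffun i => fib i F])) /=; last first.
  move=> F _; apply/setP => v; apply/bigcupP/idP => [[i _]|vF].
    by rewrite ffunE inE => /andP [].
  by exists (tag v) => //; rewrite ffunE inE vF eqxx.
apply: eq_big => f; first exact: family_iff.
rewrite family_iff => /andP [D /eqP E].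
have Ef i : f i = fib i (\bigcup_(i < k) f i) by rewrite -[in LHS]E ffunE.
under eq_bigr do rewrite Ef.
exact: prod_term.
Qed.


Lemma reind_pred (F S : {set V}) M : disjV F -> (#|F| <= M)%N ->
  (((S :\: F) \subset ~: UF F) && (#|S :\: F| == M - #|F|)%N) && ((S :\: F) :|: F == S)
  = (#|S| == M) && (F \subset BS S).
Proof.
move=> D fM; apply/idP/idP.
- move=> /andP [/andP [sub /eqP cd] /eqP E].
  have FS : F \subset S by rewrite -E subsetUr.
  have cS : #|S| = M by rewrite -(cardsID F S) (setIidPr FS) cd subnKC.
  rewrite cS eqxx /=; apply/subsetP => a aF; rewrite inE (subsetP FS a aF) /=.
  apply/forallP => s; apply/implyP => s0; apply/negP => inS.
  case: (boolP (vshift a s \in F)) => inF.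
    by move: inF; rewrite (negbTE (disj_notin D aF s0 _)) // -ltnS.
  have : vshift a s \in S :\: F by rewrite inE inF inS.
  move/(subsetP sub); rewrite inE; apply/negP/negPn; apply/UFP; exists a, s; by [].
- move=> /andP [/eqP cS sub].
  have FS : F \subset S.
    by apply: subset_trans sub _; apply/subsetP => v; rewrite inE => /andP [].
  apply/andP; split; first (apply/andP; split).
  + apply/subsetP => x; rewrite !inE => /andP [xF xS]; apply/negP => /UFP [a [s [aF Ex]]].
    have := subsetP sub a aF; rewrite inE => /andP [_ /forallP B].
    case: (posnP s) => s0.
      have E0 : vshift a s = a by rewrite s0 vshift0.
      by move: xF; rewrite Ex E0 aF.
    by have /implyP/(_ s0) := B s; rewrite -Ex xS.
  + by rewrite -cS -(cardsID F S) (setIidPr FS) addKn.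
  + apply/eqP/setP => x; rewrite !inE; case: (boolP (x \in F)) => xF /=.
      by rewrite (subsetP FS x xF).
    by rewrite orbF.
Qed.

Definition wT (m : nat) : int := if (t.+1 %| m)%N then Posz ('C(m, m %/ t.+1)) else 0%R.

Lemma LT_ext (p : {poly int}) m : (size p <= m)%N ->
  LT t p = (\sum_(j < m) p`_j * wT j)%R.
Proof.
move=> le; rewrite /LT (big_ord_widen _ (fun j => p`_j * wT j)%R le) big_mkcond.
apply: eq_bigr => i _; case: ltnP => // h.
by rewrite nth_default ?mul0r.
Qed.

Lemma LT_add (p q : {poly int}) : LT t (p + q)%R = (LT t p + LT t q)%R.
Proof.
set m := maxn (size p) (size q).
rewrite (@LT_ext _ m) ?size_polyD // (@LT_ext p m) ?leq_maxl // (@LT_ext q m) ?leq_maxr //.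
rewrite -big_split; apply: eq_bigr => i _; by rewrite coefD mulrDl.
Qed.

Lemma LT0 : LT t 0%R = 0%R.
Proof. by rewrite /LT size_poly0 big_ord0. Qed.

Lemma LT_monom (c : int) e : LT t (c *: 'X^e)%R = (c * wT e)%R.
Proof.
rewrite (@LT_ext _ e.+1); last by rewrite -(size_polyXn int e) size_scale_leq.
rewrite big_ord_recr /= big1 ?add0r; last first.
  by move=> i _; rewrite coefZ coefXn (ltn_eqF (ltn_ord i)) mulr0 mul0r.
by rewrite coefZ coefXn eqxx mulr1.
Qed.

Lemma main_sec : LT t (\prod_(i < k) Tpoly t (n i)) =
  Posz (#|[set S : {set V} | (#|S| * t.+1 == Ntot)%N && @good_marking t k n S]|).
Proof.
rewrite prodT.
rewrite (big_morph (LT t) LT_add LT0).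
under eq_bigr do rewrite LT_monom.
case: (boolP (t.+1 %| Ntot)%N) => [dvd|ndvd]; last first.
  rewrite big1; last first.
    move=> F D; rewrite /wT.
    have le : (t.+1 * #|F| <= Ntot)%N by rewrite mulnC UF_bound.
    have -> : (t.+1 %| Ntot - t.+1 * #|F|)%N = false.
      apply/negbTE; apply: contra ndvd => h.
      by rewrite -(subnK le) dvdn_add // dvdn_mulr.
    by rewrite mulr0.
  have -> : [set S : {set V} | (#|S| * t.+1 == Ntot)%N && @good_marking t k n S] = set0.
    apply/setP => S; rewrite !inE; case: eqP => // E.
    by move: ndvd; rewrite -E dvdn_mull.
  by rewrite cards0.
set M := (Ntot %/ t.+1)%N.
have NM : Ntot = (M * t.+1)%N by rewrite divnK.
transitivity (\sum_(F : {set V} | disjV F)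
   \sum_(S' : {set V} | (S' \subset ~: UF F) && (#|S'| == M - #|F|)%N) ((-1) ^+ #|F| : int))%R.
  apply: eq_bigr => F D.
  rewrite (eq_bigl (fun S' => S' \in [set S' : {set V} | (S' \subset ~: UF F) & (#|S'| == M - #|F|)%N])); last by move=> S'; rewrite inE.
  rewrite sumr_const cards_draws.
  have cC : #|~: UF F| = ((M - #|F|) * t.+1)%N.
    by rewrite -(addKn #|UF F| #|~: UF F|) cardsC -cardsT cardV card_UF // NM mulnBl.
  have E : (Ntot - t.+1 * #|F| = (M - #|F|) * t.+1)%N by rewrite NM mulnBl [(t.+1 * _)%N]mulnC.
  rewrite /wT E dvdn_mull ?dvdnn // mulnK // cC.
  by rewrite -mulr_natr natz.
transitivity (\sum_(F : {set V} | disjV F)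
   \sum_(S : {set V} | (#|S| == M) && (F \subset BS S)) ((-1) ^+ #|F| : int))%R.
  apply: eq_bigr => F D.
  have fM : (#|F| <= M)%N by rewrite -(@leq_pmul2r t.+1) // -NM UF_bound.
  rewrite (reindex_onto (fun S => S :\: F) (fun S' => S' :|: F)) /=; last first.
    move=> S' /andP [sub _]; apply/setP => x; rewrite !inE.
    case: (boolP (x \in S')) => xS /=; last by rewrite andNb.
    rewrite andbT; apply/negP => xF.
    have := subsetP sub x xS; rewrite inE => /negP; apply.
    exact: (subsetP (sub_UF F) x xF).
  by apply: eq_bigl => S; rewrite reind_pred.
rewrite (exchange_big_dep (fun S : {set V} => #|S| == M)) /=; last by move=> F S _ /andP [].
transitivity (\sum_(S : {set V} | #|S| == M) ((BS S == set0)%:R : int))%R.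
  apply: eq_bigr => S SM; rewrite -alt_sum; apply: eq_bigl => F.
  rewrite SM /=; apply/andP/idP => [[_ h] // | h]; split => //; exact: bad_disj h.
rewrite (eq_bigr (fun S => if BS S == set0 then 1 else 0)%R); last by move=> S _; case: (_ == _).
rewrite -big_mkcondr /= -natz -sum1_card natr_sum.
under [RHS]eq_bigr do rewrite mulr1n.
apply: eq_bigl => S; by rewrite inE goodE NM eqn_pmul2r.
Qed.

End Main.

Unset Implicit Arguments.
Local Open Scope ring_scope.

Theorem mainTheorem7 (t : nat) (ht : (1 <= t)%N) (k : nat) (n : 'I_k -> nat) :
  LT t (\prod_(i < k) Tpoly t (n i)) =
  (#|[set S : {set {i : 'I_k & 'I_(n i)}} |
        (#|S| * t.+1 == \sum_(i < k) n i)%N && @good_marking t k n S]|)%:Z.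
Proof. exact: main_sec. Qed.
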